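(* Let $G$ be a graph and let $p\ge 2$ be an integer. Then $\mathrm{id}^{\leq p}(G)\leq \frac{|E(G)|}{\lfloor p/2\rfloor}+\chi'_s(G)$.
   Context: A matching $M$ of $G$ is induced if every edge of $G$ joining two endvertices of edges of $M$ belongs to $M$. A strong edge-colouring of $G$ is an edge-colouring in which each colour class is an induced matching; $\chi'_s(G)$ (the strong chromatic index) is the minimum number of colours in a strong edge-colouring of $G$. For an oriented graph $D$ and $X\subseteq V(D)$, the inversion of $X$ reverses every arc with both endvertices in $X$; a $(\leq p)$-inversion is the inversion of a set of at most $p$ vertices. $\mathrm{id}^{\leq p}(G)$ is the maximum, over all ordered pairs $(\vec G_1,\vec G_2)$ of orientations of $G$, of the minimum number of $(\leq p)$-inversions transforming $\vec G_1$ into $\vec G_2$. *)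

(* Defs.v *)
From mathcomp Require Import all_boot all_order all_algebra.
Set Implicit Arguments. Unset Strict Implicit. Unset Printing Implicit Defensive.

Section Graphs.
Variable T : finType.

Definition simple_graph (e : rel T) : Prop := symmetric e /\ irreflexive e.

Definition edges (e : rel T) : {set {set T}} :=
  [set [set u; v] | u in T, v in T & e u v].

Definition endvertices (M : {set {set T}}) : {set T} := cover M.

Definition matching (e : rel T) (M : {set {set T}}) : bool :=
  (M \subset edges e) &&
  [forall f in M, forall g in M, (f != g) ==> [disjoint f & g]].

Definition induced_matching (e : rel T) (M : {set {set T}}) : bool :=
  matching e M &&
  [forall h in edges e, (h \subset endvertices M) ==> (h \in M)].

Definition strong_edge_colouring (e : rel T) (k : nat)
    (c : {ffun {set T} -> 'I_k}) : bool :=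
  [forall i : 'I_k, induced_matching e [set f in edges e | c f == i]].

Definition has_strong_edge_colouring (e : rel T) (k : nat) : bool :=
  [exists c : {ffun {set T} -> 'I_k}, strong_edge_colouring e c].

(* Strong chromatic index: least k <= |E| admitting a strong edge-colouring
   with k colours (|E| colours always suffice, so the default value #|E| is
   never spuriously used). *)
Definition strong_chromatic_index (e : rel T) : nat :=
  \big[minn/#|edges e|]_(k < #|edges e|.+1
     | has_strong_edge_colouring e k) (k : nat).

(* Orientation of G: a relation [o] (o u v means arc u -> v) such that every
   edge gets exactly one direction and only edges get arcs. *)
Definition orientation (e : rel T) (o : rel T) : Prop :=
  (forall u v, o u v -> e u v) /\
  (forall u v, e u v -> o u v (+) o v u).

Definition invert (X : {set T}) (o : rel T) : rel T :=
  fun u v => if (u \in X) && (v \in X) then o v u else o u v.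

Definition invert_seq (s : seq {set T}) (o : rel T) : rel T :=
  foldl (fun o' X => invert X o') o s.

End Graphs.

(* Main.v *)
Require Import Defs.
From mathcomp Require Import all_boot all_order all_algebra.
From mathcomp Require Import zify.

Lemma edgeP {T : finType} (e : rel T) u v : e u v -> [set u; v] \in edges e.
Proof. by move=> h; apply/imset2P; exists u v; rewrite ?inE. Qed.

Lemma edgesP {T : finType} (e : rel T) g : g \in edges e ->
  exists u v, e u v /\ g = [set u; v].
Proof. by case/imset2P=> u v _; rewrite inE => h ->; exists u, v. Qed.

Lemma edge_card {T : finType} (e : rel T) g : g \in edges e -> (#|g| <= 2)%N.
Proof. by case/edgesP=> u [v [_ ->]]; rewrite cards2; case: (u != v). Qed.

Lemma invert_seqE {T : finType} (s : seq {set T}) (o : rel T) u v :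
  invert_seq s o u v =
  if odd (count (fun X : {set T} => (u \in X) && (v \in X)) s) then o v u else o u v.
Proof.
rewrite /invert_seq; elim: s o => [|X s IH] o //=.
rewrite IH /invert oddD.
by case: (u \in X); case: (v \in X); case: (odd _).
Qed.

Lemma orient_rev {T : finType} (e : rel T) o u v :
  orientation e o -> e u v -> o v u = ~~ o u v.
Proof. by case=> _ H /H; case: (o u v); case: (o v u). Qed.

Lemma orient_non {T : finType} (e : rel T) o u v :
  orientation e o -> ~~ e u v -> o u v = false.
Proof. by case=> H _ ne; apply/negP => /H h; rewrite h in ne. Qed.

Fixpoint chunks {T : Type} (q n : nat) (L : seq T) : seq (seq T) :=
  match n with
  | 0 => [::]
  | n'.+1 => match L with [::] => [::] | _ => take q L :: chunks q n' (drop q L) end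
  end.

Lemma chunks_nil {T : Type} q n : chunks q n ([::] : seq T) = [::].
Proof. by case: n. Qed.

Lemma chunks_mem {T : eqType} q n (L : seq T) C :
  C \in chunks q n L -> {subset C <= L} /\ (size C <= q)%N.
Proof.
elim: n L => [|n IH] [|x L] //=; rewrite in_cons => /orP [/eqP -> | /IH [H1 H2]].
  split; first by move=> y /mem_take.
  by rewrite size_take_min geq_minl.
by split=> // y /H1 /mem_drop.
Qed.

Lemma chunks_count {T : eqType} q n (L : seq T) x : (0 < q)%N -> uniq L ->
  (size L <= n)%N -> count (fun C => x \in C) (chunks q n L) = (x \in L).
Proof.
move=> q0; elim: n L => [|n IH] [|y L] U sz //=. 
have Hd : (size (drop q (y :: L)) <= n)%N by move: sz; rewrite size_drop /=; lia.
rewrite IH ?drop_uniq //.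
rewrite -[in RHS](cat_take_drop q (y :: L)).
have Ucat : uniq (take q (y :: L) ++ drop q (y :: L)) by rewrite cat_take_drop.
rewrite -(count_uniq_mem _ Ucat) count_cat.
rewrite (count_uniq_mem _ (take_uniq _ U)) (count_uniq_mem _ (drop_uniq _ U)).
done.
Qed.

Lemma chunks_size {T : Type} q n (L : seq T) :
  (q * size (chunks q n L) <= size L + q)%N.
Proof.
elim: n L => [|n IH] [|y L] /=; try lia.
have := IH (drop q (y :: L)); rewrite size_drop /=.
case: (leqP (size L).+1 q) => h.
  rewrite drop_oversize //= chunks_nil /=; lia.
lia.
Qed.
Arguments orient_rev {T e o u v}.
Arguments orient_non {T e o u v}.


Definition toX {T : finType} (C : seq {set T}) : {set T} :=
  [set x | has (fun g : {set T} => x \in g) C].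

Lemma toX_card {T : finType} (C : seq {set T}) :
  (forall g, g \in C -> #|g| <= 2)%N -> (#|toX C| <= 2 * size C)%N.
Proof.
elim: C => [|g C IH] H /=.
  by rewrite leqn0 cards_eq0; apply/eqP/setP => x; rewrite !inE.
have -> : toX (g :: C) = g :|: toX C by apply/setP => x; rewrite !inE.
rewrite cardsU.
have h1 := H g (mem_head _ _).
have h2 : (#|toX C| <= 2 * size C)%N by apply: IH => g' g'C; apply: H; rewrite in_cons g'C orbT.
lia.
Qed.

Definition classP {T : finType} (e : rel T) (c : {set T} -> nat) :=
  forall g1 g2 u v, g1 \in edges e -> g2 \in edges e -> c g1 = c g2 ->
    e u v -> u \in g1 -> v \in g2 -> [set u; v] = g1.

Lemma toX_pair {T : finType} (e : rel T) c i (C : seq {set T}) u v :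
  classP e c -> (forall g, g \in C -> (g \in edges e) && (c g == i)) -> e u v ->
  (u \in toX C) && (v \in toX C) = ([set u; v] \in C).
Proof.
move=> cP HC euv; apply/idP/idP.
  rewrite !inE => /andP [/hasP [g1 g1C ug1] /hasP [g2 g2C vg2]].
  have /andP [E1 /eqP c1] := HC _ g1C.
  have /andP [E2 /eqP c2] := HC _ g2C.
  by rewrite (cP g1 g2 u v) // c1 c2.
move=> h; rewrite !inE; apply/andP; split; apply/hasP; exists [set u; v] => //;
  by rewrite !inE eqxx ?orbT.
Qed.

Lemma sumn_bool (r : seq nat) (P : pred nat) :
  sumn [seq (P i : nat) | i <- r] = count P r.
Proof. by elim: r => //= i r ->. Qed.

Lemma sumn_bound (f g : nat -> nat) q r : (forall i, q * f i <= g i + q)%N ->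
  (q * sumn (map f r) <= sumn (map g r) + q * size r)%N.
Proof.
move=> H; elim: r => //= i r IH; have := H i; lia.
Qed.

Lemma sum_count_le (A : eqType) (c : A -> nat) (r : seq nat) (s : seq A) :
  uniq r ->
  (sumn [seq count (fun g => c g == i) s | i <- r] <= count (fun g => c g \in r) s)%N.
Proof.
elim: r => //= i r IH /andP [ir Ur].
apply: (leq_trans (leq_add (leqnn _) (IH Ur))).
rewrite -count_predUI.
have -> : count (predI (fun g => c g == i) (fun g => c g \in r)) s = 0%N.
  apply/eqP; rewrite -leqn0 leqNgt -has_count; apply/negP => /hasP [g _] /andP [/eqP ci cr].
  by rewrite -ci cr in ir.
by rewrite addn0; apply: eq_leq; apply: eq_count => g /=; rewrite in_cons.
Qed.


Definition Dset {T : finType} (e o1 o2 : rel T) : {set {set T}} :=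
  [set f in edges e | [exists a, exists b,
     (f == [set a; b]) && e a b && (o1 a b != o2 a b)]].

Lemma Dchar (T : finType) (e o1 o2 : rel T) u v :
  simple_graph e -> orientation e o1 -> orientation e o2 -> e u v ->
  ([set u; v] \in Dset e o1 o2) = (o1 u v != o2 u v).
Proof.
move=> [sym irr] O1 O2 euv.
have uv : u != v by apply/eqP => E; rewrite E irr in euv.
rewrite inE edgeP //=; apply/idP/idP.
  move=> /existsP [a /existsP [b /andP [/andP [/eqP E eab] m]]].
  have au : a \in [set u; v] by rewrite E !inE eqxx.
  have bu : b \in [set u; v] by rewrite E !inE eqxx orbT.
  have ab : a != b by apply/eqP => E'; rewrite E' irr in eab.
  move: au bu; rewrite !inE => /orP [/eqP au | /eqP au] /orP [/eqP bu | /eqP bu];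
    subst a b => //; first by rewrite eqxx in ab.
    rewrite (orient_rev O1 euv) (orient_rev O2 euv) in m.
    by move: m; case: (o1 u v); case: (o2 u v).
  by rewrite eqxx in ab.
move=> m; apply/existsP; exists u; apply/existsP; exists v.
by rewrite eqxx euv m.
Qed.

Definition Lc {T : finType} (c : {set T} -> nat) (D : {set {set T}}) (i : nat) :=
  [seq g <- enum D | c g == i].

Definition sq {T : finType} q k (c : {set T} -> nat) (D : {set {set T}}) :=
  flatten [seq map toX (chunks q (size (Lc c D i)) (Lc c D i)) | i <- iota 0 k].

Lemma construct (T : finType) (e : rel T) (p : nat) (o1 o2 : rel T) k
    (c : {set T} -> nat) :
  simple_graph e -> (2 <= p)%N -> orientation e o1 -> orientation e o2 ->
  (forall f, f \in edges e -> c f < k)%N -> classP e c ->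
  exists s : seq {set T},
    (forall X, X \in s -> #|X| <= p)%N /\
    (forall u v, invert_seq s o1 u v = o2 u v) /\
    (p./2 * size s <= #|edges e| + p./2 * k)%N.
Proof.
move=> G p2 O1 O2 ck cP.
set q := p./2.
have q0 : (0 < q)%N by rewrite half_gt0.
have q2 : (2 * q <= p)%N by have := odd_double_half p; rewrite -/q; lia.
set D := Dset e o1 o2.
have DE : D \subset edges e by apply/subsetP => f; rewrite inE => /andP [].
have LcP i g : g \in Lc c D i -> (g \in edges e) && (c g == i).
  by rewrite mem_filter mem_enum => /andP [-> /(subsetP DE) ->].
exists (sq q k c D); split; [|split].
- move=> X /flattenP [Xs /mapP [i _ ->] /mapP [C Cin ->]].
  have [sub sz] := chunks_mem _ _ _ _ Cin.
  have hc : (#|toX C| <= 2 * size C)%N.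
    by apply: toX_card => g /sub /LcP /andP [/edge_card].
  lia.
- move=> u v; rewrite invert_seqE.
  case: (boolP (e u v)) => euv; last first.
    have evu : ~~ e v u by rewrite (proj1 G).
    by rewrite !(orient_non O1) ?(orient_non O2) //; case: ifP.
  set f := [set u; v].
  have -> : count (fun X : {set T} => (u \in X) && (v \in X)) (sq q k c D) = (f \in D).
    rewrite /sq count_flatten -map_comp.
    rewrite (eq_map (g := fun i => ((f \in Lc c D i) : nat))); last first.
      move=> i /=; rewrite count_map.
      rewrite (eq_in_count (a2 := fun C : seq {set T} => f \in C)); last first.
        move=> C Cin /=; have [sub _] := chunks_mem _ _ _ _ Cin.
        by apply: (@toX_pair T e c i) => // g /sub /LcP.
      by rewrite chunks_count // filter_uniq ?enum_uniq.
    rewrite sumn_bool.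
    case: (boolP (f \in D)) => fD.
      have fE : f \in edges e by apply: (subsetP DE).
      rewrite (eq_count (a2 := pred1 (c f))); last first.
        by move=> i /=; rewrite mem_filter mem_enum fD andbT eq_sym.
      by rewrite count_uniq_mem ?iota_uniq // mem_iota ck.
    rewrite (eq_count (a2 := pred0)) ?count_pred0 //.
    by move=> i /=; rewrite mem_filter mem_enum (negbTE fD) andbF.
  rewrite /f Dchar //.
  rewrite (orient_rev O1 euv).
  by case: (o1 u v); case: (o2 u v).
- rewrite /sq size_flatten /shape -map_comp.
  rewrite (eq_map (g := fun i => size (chunks q (size (Lc c D i)) (Lc c D i)))); last first.
    by move=> i /=; rewrite size_map.
  apply: (leq_trans (sumn_bound _ (fun i => size (Lc c D i)) q _ _)).
    by move=> i; apply: chunks_size.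
  rewrite size_iota leq_add2r.
  rewrite /Lc (eq_map (g := fun i => count (fun g => c g == i) (enum D))); last first.
    by move=> i; rewrite size_filter.
  apply: (leq_trans (sum_count_le _ c _ (enum D) (iota_uniq 0 k))).
  apply: (leq_trans (count_size _ _)).
  by rewrite -cardE subset_leq_card.
Qed.


Lemma classP_triv {T : finType} (e : rel T) : simple_graph e ->
  classP e (fun f => index f (enum (edges e))).
Proof.
move=> [_ irr] g1 g2 u v E1 E2 ci euv ug1 vg2.
have g12 : g1 = g2.
  have h1 := nth_index g1 (s := enum (edges e)) (x := g1).
  have h2 := nth_index g1 (s := enum (edges e)) (x := g2).
  rewrite mem_enum in h1; rewrite mem_enum in h2.
  by rewrite -(h1 E1) -(h2 E2) ci.
subst g2; apply/eqP; rewrite eqEcard; apply/andP; split.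
  by apply/subsetP => x; rewrite !inE => /orP [] /eqP ->.
have uv : u != v by apply/eqP => E; rewrite E irr in euv.
by rewrite cards2 uv (edge_card _ _ E1).
Qed.

Lemma classP_col {T : finType} (e : rel T) k (col : {ffun {set T} -> 'I_k}) :
  strong_edge_colouring e col -> classP e (fun f => nat_of_ord (col f)).
Proof.
move=> /forallP Hc g1 g2 u v E1 E2 /val_inj ci euv ug1 vg2.
have /andP [/andP [_ Mm] Mi] := Hc (col g1).
set M := [set f in edges e | col f == col g1] in Mm Mi.
have g1M : g1 \in M by rewrite inE E1 eqxx.
have g2M : g2 \in M by rewrite inE E2 ci eqxx.
have hM : [set u; v] \in M.
  move/forall_inP: Mi => Mi; apply: (implyP (Mi _ (edgeP _ _ _ euv))).
  apply/subsetP => x; rewrite !inE => /orP [] /eqP ->;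
    rewrite /endvertices /cover; apply/bigcupP; [exists g1 | exists g2] => //.
move/forall_inP: Mm => Mm.
have := Mm _ hM; move/forall_inP => /(_ _ g1M).
case: (eqVneq [set u; v] g1) => // _ /= dis.
by have := disjointFr dis (set21 u v); rewrite ug1.
Qed.

Lemma sci_prop {T : finType} (e : rel T) :
  strong_chromatic_index e = #|edges e| \/
  has_strong_edge_colouring e (strong_chromatic_index e).
Proof.
rewrite /strong_chromatic_index.
apply: (big_ind (fun x => x = #|edges e| \/ has_strong_edge_colouring e x)).
- by left.
- by move=> x y Px Py; rewrite /minn; case: ifP.
- by move=> i Hi; right.
Qed.

Import Order.TTheory GRing.Theory Num.Theory.
Local Open Scope ring_scope.

Lemma rat_bound (q n E k : nat) : (0 < q)%N -> (q * n <= E + q * k)%N ->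
  (n%:R : rat) <= E%:R / q%:R + k%:R.
Proof.
move=> q0 h.
have qp : (0 : rat) < q%:R by rewrite ltr0n.
rewrite -(ler_pM2r qp) mulrDl divfK ?gt_eqF //.
by rewrite -!natrM -natrD ler_nat mulnC [(k * q)%N]mulnC.
Qed.

Theorem mainTheorem14 (T : finType) (e : rel T) (p : nat) :
  simple_graph e -> (2 <= p)%N ->
  forall o1 o2 : rel T, orientation e o1 -> orientation e o2 ->
  exists s : seq {set T},
    (forall X, X \in s -> #|X| <= p)%N /\
    (forall u v, invert_seq s o1 u v = o2 u v) /\
    ((size s)%:R : rat) <=
      (#|edges e|)%:R / (p./2)%:R + (strong_chromatic_index e)%:R.
Proof.
move=> G p2 o1 o2 O1 O2.
have q0 : (0 < p./2)%N by rewrite half_gt0.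
case: (sci_prop e) => [Heq | /existsP [col Hcol]].
  have [s [H1 [H2 H3]]] := construct T e p o1 o2 #|edges e| (fun f => index f (enum (edges e))) G p2 O1 O2
     (fun f fE => ltac:(by rewrite cardE index_mem mem_enum)) (classP_triv e G).
  exists s; split => //; split => //.
  by rewrite Heq; apply: rat_bound.
have [s [H1 [H2 H3]]] := construct T e p o1 o2 (strong_chromatic_index e) (fun f => nat_of_ord (col f)) G p2 O1 O2
   (fun f fE => ltn_ord (col f)) (classP_col e _ col Hcol).
exists s; split => //; split => //.
by apply: rat_bound.
Qed.
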